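(* A sequence $\mathfrak{f}\in\mathfrak{M}_4$ belongs to $\mathfrak{S}_4$ if and only if $$\mathfrak{f}=\alpha_{11}\mathfrak{p}_{(1^4)}+2\alpha_{12}\mathfrak{p}_{(2,1^2)}+\alpha_{22}\mathfrak{p}_{(2^2)}+\beta_{11}\left(\mathfrak{p}_{(2,1^2)}-\mathfrak{p}_{(1^4)}\right)+2\beta_{12}\left(\mathfrak{p}_{(3,1)}-\mathfrak{p}_{(2,1^2)}\right)+\beta_{22}\left(\mathfrak{p}_{(4)}-\mathfrak{p}_{(2^2)}\right)$$ for some real numbers such that $\begin{pmatrix}\alpha_{11}&\alpha_{12}\\ \alpha_{12}&\alpha_{22}\end{pmatrix}$ and $\begin{pmatrix}\beta_{11}&\beta_{12}\\ \beta_{12}&\beta_{22}\end{pmatrix}$ are positive semidefinite.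
   Context: $p^{(n)}_i=\frac1n(x_1^i+\dots+x_n^i)$, $p^{(n)}_\lambda=\prod_i p^{(n)}_{\lambda_i}$ for a partition $\lambda$ of $4$. For $\lambda\vdash 4$, $\mathfrak{p}_\lambda$ denotes the sequence $(p^{(4)}_\lambda,p^{(5)}_\lambda,\dots)$, and $\mathfrak{M}_4$ is the 5-dimensional real vector space of sequences $\mathfrak{f}=\sum_{\lambda\vdash4}c_\lambda\mathfrak{p}_\lambda$, i.e. $\mathfrak{f}=(f^{(n)})_{n\ge4}$ with $f^{(n)}=\sum_\lambda c_\lambda p^{(n)}_\lambda$. $\mathfrak{S}_4$ is the set of $\mathfrak{f}\in\mathfrak{M}_4$ such that $f^{(n)}$ is a sum of squares of real forms for every $n\ge 4$. *)

(* Defs.v *)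
From HB Require Import structures.
From mathcomp Require Import all_boot all_order all_algebra.
From mathcomp Require Import reals.
From mathcomp Require Import mpoly.

Set Implicit Arguments.
Unset Strict Implicit.
Unset Printing Implicit Defensive.

Import Order.TTheory GRing.Theory Num.Theory.
Local Open Scope ring_scope.

Inductive part4 : Type := P4 | P31 | P22 | P211 | P1111.

Section Defs.
Variable R : realType.

Definition psum (n i : nat) : {mpoly R[n]} :=
  (n%:R)^-1 *: \sum_(j < n) ('X_j) ^+ i.

Definition ppart (n : nat) (l : part4) : {mpoly R[n]} :=
  match l with
  | P4 => psum n 4
  | P31 => psum n 3 * psum n 1
  | P22 => psum n 2 * psum n 2
  | P211 => psum n 2 * psum n 1 * psum n 1
  | P1111 => psum n 1 * psum n 1 * psum n 1 * psum n 1
  end.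

(* an element f = sum_lambda c_lambda p_lambda of M_4, given by its coefficient
   vector c; its n-th term f^{(n)} : *)
Definition fseq (c : part4 -> R) (n : nat) : {mpoly R[n]} :=
  c P4 *: ppart n P4 + c P31 *: ppart n P31 + c P22 *: ppart n P22
  + c P211 *: ppart n P211 + c P1111 *: ppart n P1111.

Definition sos_forms (n : nat) (p : {mpoly R[n]}) : Prop :=
  exists s : seq {mpoly R[n]},
    (forall g, g \in s -> exists d : nat, g \is d.-homog) /\
    p = \sum_(g <- s) g ^+ 2.

Definition inS4 (c : part4 -> R) : Prop :=
  forall n : nat, (4 <= n)%N -> sos_forms (fseq c n).

Definition seq_eq (c c' : part4 -> R) : Prop :=
  forall n : nat, (4 <= n)%N -> fseq c n = fseq c' n.

Definition psd2 (M : 'M[R]_2) : Prop :=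
  M^T = M /\ forall v : 'cV[R]_2, 0 <= (v^T *m M *m v) 0 0.

Definition sym2 (a b d : R) : 'M[R]_2 :=
  \matrix_(i < 2, j < 2)
    (if (i == 0 :> nat) && (j == 0 :> nat) then a
     else if (i == 1 :> nat) && (j == 1 :> nat) then d else b).

(* coefficient vector of
   a11 p_(1^4) + 2 a12 p_(2,1^2) + a22 p_(2^2) + b11 (p_(2,1^2) - p_(1^4))
   + 2 b12 (p_(3,1) - p_(2,1^2)) + b22 (p_(4) - p_(2^2)) *)
Definition combo (a11 a12 a22 b11 b12 b22 : R) (l : part4) : R :=
  match l with
  | P4 => b22
  | P31 => 2 * b12
  | P22 => a22 - b22
  | P211 => 2 * a12 + b11 - 2 * b12
  | P1111 => a11 - b11
  end.

End Defs.

(* Main.v *)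
Require Import Defs.
From HB Require Import structures.
From mathcomp Require Import all_boot all_order all_algebra.
From mathcomp Require Import reals.
From mathcomp Require Import mpoly.
From mathcomp Require Import ring lra.
From mathcomp Require Import polyrcf.
Import Order.TTheory GRing.Theory Num.Theory.
Local Open Scope ring_scope.

Section Gen.
Variable R : realType.
Variable A : comAlgType R.
Definition sc (a : R) : A := in_alg A a.
Lemma scE (a : R) (x : A) : a *: x = sc a * x.
Proof. by rewrite /sc /= mulr_algl. Qed.
Lemma scM a b : sc (a * b) = sc a * sc b.
Proof. by rewrite /sc rmorphM. Qed.
Lemma scD a b : sc (a + b) = sc a + sc b.
Proof. by rewrite /sc rmorphD. Qed.
Lemma scB a b : sc (a - b) = sc a - sc b.
Proof. by rewrite /sc rmorphB. Qed.
Lemma scX a k : sc (a ^+ k) = sc a ^+ k.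
Proof. by rewrite /sc rmorphXn. Qed.
Lemma scn k : sc k%:R = k%:R.
Proof. by rewrite /sc rmorph_nat. Qed.
Lemma scN a : sc (- a) = - sc a.
Proof. by rewrite /sc rmorphN. Qed.
Lemma sc1 : sc 1 = 1.
Proof. by rewrite /sc rmorph1. Qed.
Lemma sq_comb (l1 mu l2 : R) (u v : A) :
  (l1 *: u + mu *: v) ^+ 2 + (l2 *: v) ^+ 2 =
  (l1 ^+ 2) *: u ^+ 2 + (2 * (l1 * mu)) *: (u * v) + (mu ^+ 2 + l2 ^+ 2) *: v ^+ 2.
Proof. rewrite !scE; rewrite ?(scX, scM, scD, scB, scN, scn, sc1). ring. Qed.
Lemma sum_poly4 (I : Type) (r : seq I) (x : I -> A) (c0 c1 c2 c3 c4 : A) :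
  \sum_(j <- r) (c0 + c1 * x j + c2 * x j ^+ 2 + c3 * x j ^+ 3 + c4 * x j ^+ 4) =
  c0 * \sum_(j <- r) 1 + c1 * \sum_(j <- r) x j + c2 * \sum_(j <- r) x j ^+ 2
  + c3 * \sum_(j <- r) x j ^+ 3 + c4 * \sum_(j <- r) x j ^+ 4.
Proof.
elim: r => [|j r IH]; first by rewrite !big_nil; ring.
rewrite !big_cons IH; ring.
Qed.

Lemma key_id (n : nat) (x : 'I_n -> A) (P : nat -> A) (e N : R)
    (a11 a12 a22 b11 b12 b22 : R) :
  e * N = 1 -> (forall i, \sum_(j < n) x j ^+ i = N *: P i) ->
  \sum_(j < n) (1 : A) = N *: 1 ->
  b22 *: P 4%N + (2 * b12) *: (P 3%N * P 1%N) + (a22 - b22) *: (P 2%N * P 2%N)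
  + (2 * a12 + b11 - 2 * b12) *: (P 2%N * P 1%N * P 1%N)
  + (a11 - b11) *: (P 1%N * P 1%N * P 1%N * P 1%N)
  = a11 *: (P 1%N ^+ 2) ^+ 2 + (2 * a12) *: (P 1%N ^+ 2 * P 2%N) + a22 *: P 2%N ^+ 2
    + \sum_(j < n) ((e * b11) *: (P 1%N * (x j - P 1%N)) ^+ 2
        + (2 * (e * b12)) *: ((P 1%N * (x j - P 1%N)) * (x j ^+ 2 - P 2%N))
        + (e * b22) *: (x j ^+ 2 - P 2%N) ^+ 2).
Proof.
move=> he hs h1.
have h1' : \sum_(j < n) x j = N *: P 1%N by rewrite -hs; apply: eq_bigr => j _; rewrite expr1.
move: (P 1%N) (P 2%N) (P 3%N) (P 4%N) h1' (hs 2%N) (hs 3%N) (hs 4%N) => P1 P2 P3 P4 s1 s2 s3 s4.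
have -> : \sum_(j < n) ((e * b11) *: (P1 * (x j - P1)) ^+ 2
        + (2 * (e * b12)) *: ((P1 * (x j - P1)) * (x j ^+ 2 - P2))
        + (e * b22) *: (x j ^+ 2 - P2) ^+ 2)
  = sc e * \sum_(j < n) (
       (sc b11 * P1 ^+ 4 + 2%:R * sc b12 * P1 ^+ 2 * P2 + sc b22 * P2 ^+ 2)
     + (- 2%:R * sc b11 * P1 ^+ 3 - 2%:R * sc b12 * P1 * P2) * x j
     + (sc b11 * P1 ^+ 2 - 2%:R * sc b12 * P1 ^+ 2 - 2%:R * sc b22 * P2) * x j ^+ 2
     + (2%:R * sc b12 * P1) * x j ^+ 3 + sc b22 * x j ^+ 4).
  rewrite mulr_sumr; apply: eq_bigr => j _.
  rewrite !scE ?(scX, scM, scD, scB, scN, scn, sc1); ring.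
rewrite sum_poly4 h1 s1 s2 s3 s4 !scE ?(scX, scM, scD, scB, scN, scn, sc1).
have he' : sc e * sc N = 1 by rewrite -scM he sc1.
move: (sc e) (sc N) he' => E M hEM.
set b1 := sc b11; set b2 := sc b12; set b3 := sc b22.
have -> : (b1 * P1 ^+ 4 + 2%:R * b2 * P1 ^+ 2 * P2 + b3 * P2 ^+ 2) * (M * 1) +
       (- 2%:R * b1 * P1 ^+ 3 - 2%:R * b2 * P1 * P2) * (M * P1) +
       (b1 * P1 ^+ 2 - 2%:R * b2 * P1 ^+ 2 - 2%:R * b3 * P2) * (M * P2) +
       2%:R * b2 * P1 * (M * P3) + b3 * (M * P4)
   = M * (b1 * (P1 ^+ 2 * P2 - P1 ^+ 4) + 2%:R * b2 * (P3 * P1 - P2 * P1 ^+ 2)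
          + b3 * (P4 - P2 ^+ 2)) by ring.
rewrite [E * _]mulrA hEM mul1r ?scN; ring.
Qed.
End Gen.

Section PSD.
Variable R : realType.

Lemma quad_sym2 (a b d : R) (v : 'cV[R]_2) :
  (v^T *m sym2 a b d *m v) 0 0 =
  a * v ord0 0 ^+ 2 + 2 * b * v ord0 0 * v ord_max 0 + d * v ord_max 0 ^+ 2.
Proof.
rewrite !mxE !big_ord_recr !big_ord0 /= !mxE !big_ord_recr !big_ord0 /= !mxE /=.
have -> : widen_ord (leqnSn 1) (@ord_max 0) = ord0 :> 'I_2 by apply/val_inj.
rewrite /=. ring.
Qed.

Lemma sym2_tr (a b d : R) : (sym2 a b d)^T = sym2 a b d.
Proof.
apply/matrixP => i j; rewrite !mxE.
by case: i => [[|[|i]] Hi] //; case: j => [[|[|j]] Hj].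
Qed.

Definition cv2 (x y : R) : 'cV[R]_2 := \col_(i < 2) (if (i == 0 :> nat) then x else y).

Lemma quad_cv2 (a b d x y : R) :
  ((cv2 x y)^T *m sym2 a b d *m cv2 x y) 0 0 = a * x ^+ 2 + 2 * b * x * y + d * y ^+ 2.
Proof. by rewrite quad_sym2 !mxE. Qed.

Lemma psd2_sym2 (a b d : R) :
  psd2 (sym2 a b d) <-> [/\ 0 <= a, 0 <= d & b ^+ 2 <= a * d].
Proof.
split.
  case=> _ H.
  have h1 := H (cv2 1 0); have h2 := H (cv2 0 1); have h3 := H (cv2 b (- a)).
  have h4 := H (cv2 d (- b)); have h5 := H (cv2 1 (- b)).
  rewrite !quad_cv2 in h1 h2 h3 h4 h5.
  split; [nra|nra|].
  have [a0|a0] := lerP a 0.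
    have [d0|d0] := lerP d 0.
      nra.
    nra.
  nra.
case=> ha hd hb; split; first exact: sym2_tr.
move=> v; rewrite quad_sym2.
set x := v ord0 0; set y := v ord_max 0.
have [a0|a0] := lerP a 0.
  have -> : a = 0 by lra.
  have -> : b = 0 by nra.
  nra.
have e : a * (a * x ^+ 2 + 2 * b * x * y + d * y ^+ 2) = (a * x + b * y) ^+ 2 + (a * d - b ^+ 2) * y ^+ 2 by ring.
have : 0 <= a * (a * x ^+ 2 + 2 * b * x * y + d * y ^+ 2).
  rewrite e; apply: addr_ge0; first exact: sqr_ge0.
  by apply: mulr_ge0; [lra|exact: sqr_ge0].
by rewrite pmulr_rge0.
Qed.
End PSD.


Section S.
Variable R : realType.
Variable n : nat.
Lemma hX (j : 'I_n) : ('X_j : {mpoly R[n]}) \is 1%N.-homog.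
Proof. by rewrite dhomogX; apply/eqP; exact: mdeg1. Qed.
Lemma hpsum i : psum R n i \is i.-homog.
Proof.
rewrite /psum; apply: rpredZ; apply: rpred_sum => j _.
by have := dhomogMn i (hX j); rewrite mul1n.
Qed.
Lemma sos0 : @sos_forms R n 0.
Proof. by exists [::]; split => //; rewrite big_nil. Qed.
Lemma sosD (p q : {mpoly R[n]}) : sos_forms p -> sos_forms q -> sos_forms (p + q).
Proof.
move=> [s [hs ->]] [t [ht ->]]; exists (s ++ t); split; last by rewrite big_cat.
by move=> g; rewrite mem_cat => /orP [/hs|/ht].
Qed.
Lemma sos_sq (g : {mpoly R[n]}) d : g \is d.-homog -> sos_forms (g ^+ 2).
Proof.
move=> hg; exists [:: g]; split; last by rewrite big_seq1.
by move=> g'; rewrite inE => /eqP ->; exists d.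
Qed.
Lemma sos_sum (I : Type) (r : seq I) (F : I -> {mpoly R[n]}) :
  (forall i, sos_forms (F i)) -> sos_forms (\sum_(i <- r) F i).
Proof.
move=> H; elim: r => [|i r IH]; first by rewrite big_nil; exact: sos0.
by rewrite big_cons; apply: sosD.
Qed.
Lemma sos_quad (a b d : R) (u v : {mpoly R[n]}) k :
  0 <= a -> 0 <= d -> b ^+ 2 <= a * d -> u \is k.-homog -> v \is k.-homog ->
  sos_forms (a *: u ^+ 2 + (2 * b) *: (u * v) + d *: v ^+ 2).
Proof.
move=> ha hd hb hu hv.
pose l1 := Num.sqrt a; pose mu := b / l1; pose l2 := Num.sqrt (d - mu ^+ 2).
have hl1 : l1 ^+ 2 = a by rewrite sqr_sqrtr.
have hmu : l1 * mu = b /\ mu ^+ 2 <= d.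
  have [a0|a0] := eqVneq a 0.
    have b0 : b = 0 by move: hb; rewrite a0 mul0r; nra.
    by rewrite /mu b0 mul0r mulr0; split => //; rewrite expr0n.
  have l10 : l1 != 0 by rewrite sqrtr_eq0 -ltNge lt_def a0 ha.
  split; first by rewrite /mu mulrCA divff // mulr1.
  rewrite /mu expr_div_n hl1 ler_pdivrMr ?lt_def ?a0 //; lra.
case: hmu => hmu1 hmu2.
have hl2 : mu ^+ 2 + l2 ^+ 2 = d by rewrite sqr_sqrtr ?subr_ge0 //; ring.
have <- : (l1 *: u + mu *: v) ^+ 2 + (l2 *: v) ^+ 2 = a *: u ^+ 2 + (2 * b) *: (u * v) + d *: v ^+ 2.
  by rewrite sq_comb hl1 hmu1 hl2.
apply: sosD; apply: (@sos_sq _ k).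
  by apply: rpredD; apply: rpredZ.
by apply: rpredZ.
Qed.
End S.


Lemma backward (R : realType) (c : part4 -> R) (a11 a12 a22 b11 b12 b22 : R) :
  psd2 (sym2 a11 a12 a22) -> psd2 (sym2 b11 b12 b22) ->
  seq_eq c (combo a11 a12 a22 b11 b12 b22) -> inS4 c.
Proof.
move=> /psd2_sym2 [ha1 ha2 ha3] /psd2_sym2 [hb1 hb2 hb3] heq n n4.
rewrite heq // /fseq /ppart /=.
have n0 : (n%:R : R) != 0 by rewrite pnatr_eq0 -lt0n (leq_trans _ n4).
rewrite (@key_id R {mpoly R[n]} n (fun j => 'X_j) (psum R n) n%:R^-1 n%:R); last first.
- by rewrite sumr_const card_ord scaler_nat.
- by move=> i; rewrite /psum scalerA mulfV // scale1r.
- by rewrite mulVf.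
have hP1 : psum R n 1 \is 1%N.-homog by exact: hpsum.
have hP2 : psum R n 2 \is 2%N.-homog by exact: hpsum.
apply: sosD.
  apply: (@sos_quad R n _ _ _ _ _ 2%N) => //.
  by have := dhomogMn 2 hP1.
apply: sos_sum => j.
have e0 : 0 < (n%:R^-1 : R) by rewrite invr_gt0 ltr0n (leq_trans _ n4).
apply: (@sos_quad R n _ _ _ _ _ 2%N).
- by apply: mulr_ge0 => //; exact: ltW.
- by apply: mulr_ge0 => //; exact: ltW.
- rewrite -subr_ge0.
  rewrite (_ : _ - _ = (n%:R^-1 : R) ^+ 2 * (b11 * b22 - b12 ^+ 2)); last by ring.
  by apply: mulr_ge0; [apply: exprn_ge0; exact: ltW | rewrite subr_ge0].
- apply: (@dhomogM _ _ _ 1%N _ 1%N) => //.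
  by apply: rpredB => //; exact: hX.
- apply: rpredB => //.
  by have := dhomogMn 2 (@hX R n j).
Qed.

Section Alg.
Variable R : realType.

Lemma quad_lb (a b K : R) : (forall s, 0 <= a * s ^+ 2 + b * s + K) ->
  0 <= a /\ (a = 0 -> b = 0).
Proof.
move=> H; split.
  rewrite leNgt; apply/negP => a0.
  pose s := (`|b| + `|K| + 1) / (- a) + 1.
  have na0 : - a != 0 by rewrite oppr_eq0 ltr0_neq0.
  have hs0 : 0 <= (`|b| + `|K| + 1) / (- a).
    apply: divr_ge0; last by rewrite oppr_ge0 ltW.
    have := normr_ge0 b; have := normr_ge0 K; lra.
  have hs1 : 1 <= s by rewrite /s lerDr.
  have has : - a * s >= `|b| + `|K| + 1.
    rewrite /s mulrDr mulrC divfK //; lra.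
  have := H s. have := ler_norm b. have := ler_norm K.
  have hb : b * s <= `|b| * s by rewrite ler_wpM2r ?ler_norm //; lra.
  have p1 : 0 <= (- a * s - (`|b| + `|K| + 1)) * s.
    by apply: mulr_ge0; lra.
  have p2 : 0 <= (s - 1) * (`|K| + 1).
    by apply: mulr_ge0; have := normr_ge0 K; lra.
  nra.
move=> a0; apply/eqP; apply/negP => /negP bn0.
have := H (- (`|K| + 1) / b); rewrite a0 mul0r add0r mulrCA divff // mulr1.
have := ler_norm K; lra.
Qed.


Lemma psd_y (S D sS sD y : R) : 0 <= sS -> 0 <= sD -> sS ^+ 2 = S -> sD ^+ 2 = D ->
  - (2 * sS * sD) <= y -> y <= 2 * sS * sD ->
  0 <= S + D - y /\ ((y - 2 * D) / 2) ^+ 2 <= (S + D - y) * D.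
Proof.
move=> hs hd <- <- h1 h2; split.
  have : 0 <= (sS - sD) ^+ 2 by exact: sqr_ge0.
  nra.
have e : ((y - 2 * sD ^+ 2) / 2) ^+ 2 = (y / 2) ^+ 2 - y * sD ^+ 2 + sD ^+ 4.
  by field.
rewrite e.
have h3 : (y / 2) ^+ 2 <= (sS * sD) ^+ 2.
  have -> : (y / 2) ^+ 2 = y ^+ 2 / 4 by field.
  rewrite ler_pdivrMr //.
  have : 0 <= (2 * sS * sD - y) * (y + 2 * sS * sD) by apply: mulr_ge0; lra.
  nra.
nra.
Qed.

Lemma final_alg (c4 c31 c22 c211 c1111 : R) :
  let S := c4 + c31 + c22 + c211 + c1111 in
  let K := c211 + c31 in
  let D := c22 + c4 in
  0 <= S -> 0 <= D ->
  (forall sg r, 0 <= r -> 0 <= S + (K + 2 * D + c31 * sg + c4 * sg ^+ 2) * r + D * r ^+ 2) ->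
  exists t, [/\ 0 <= t, 0 <= c4, (c31 / 2) ^+ 2 <= t * c4, 0 <= c1111 + t
             & ((K - t) / 2) ^+ 2 <= (c1111 + t) * D].
Proof.
move=> S K D hS hD hG.
have [c40 c4z] : 0 <= c4 /\ (c4 = 0 -> c31 = 0).
  apply: (@quad_lb c4 c31 (S + K + 3 * D)) => s.
  have := hG s 1 ler01.
  have -> : S + (K + 2 * D + c31 * s + c4 * s ^+ 2) * 1 + D * 1 ^+ 2
            = c4 * s ^+ 2 + c31 * s + (S + K + 3 * D) by ring.
  by [].
pose tB := c31 ^+ 2 / (4 * c4).
pose s0 := - c31 / (2 * c4).
have hs0 : c31 * s0 + c4 * s0 ^+ 2 = - tB.
  have [c4e|c4n] := eqVneq c4 0.
    rewrite /s0 /tB c4e (c4z c4e) !mulr0 invr0 !mulr0 mul0r; ring.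
  rewrite /s0 /tB; field; exact: c4n.
have tB0 : 0 <= tB by apply: divr_ge0; [exact: sqr_ge0 | apply: mulr_ge0].
have htB : (c31 / 2) ^+ 2 <= tB * c4.
  have [c4e|c4n] := eqVneq c4 0.
    by rewrite c4e (c4z c4e) mulr0 mul0r expr0n.
  have -> : tB * c4 = (c31 / 2) ^+ 2 by rewrite /tB; field.
  by [].
pose H := K + 2 * D - tB.
have hH r : 0 <= r -> 0 <= S + H * r + D * r ^+ 2.
  move=> r0; have := hG s0 r r0.
  have -> : K + 2 * D + c31 * s0 + c4 * s0 ^+ 2 = H by rewrite -addrA hs0 /H; ring.
  by [].
pose sS := Num.sqrt S; pose sD := Num.sqrt D.
have sS0 : 0 <= sS by exact: sqrtr_ge0.
have sD0 : 0 <= sD by exact: sqrtr_ge0.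
have sS2 : sS ^+ 2 = S by rewrite sqr_sqrtr.
have sD2 : sD ^+ 2 = D by rewrite sqr_sqrtr.
have hHlb : - (2 * sS * sD) <= H.
  rewrite leNgt; apply/negP => hlt.
  have [sDe|sDn] := eqVneq sD 0.
    have De : D = 0 by rewrite -sD2 sDe expr0n.
    rewrite sDe mulr0 oppr0 in hlt.
    pose r := (S + 1) / (- H).
    have rp : 0 < r by rewrite /r divr_gt0 // ?oppr_gt0 //; lra.
    have hr : r * (- H) = S + 1 by rewrite /r divfK //; rewrite oppr_eq0; apply: ltr0_neq0.
    have := hH r (ltW rp); rewrite De mul0r addr0.
    nra.
  have sDp : 0 < sD by rewrite lt_def sDn sD0.
  have [sSe|sSn] := eqVneq sS 0.
    have Se : S = 0 by rewrite -sS2 sSe expr0n.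
    rewrite sSe mulr0 mul0r oppr0 in hlt.
    have Dp : 0 < D by rewrite -sD2 exprn_gt0.
    pose r := - H / (D + 1).
    have rp : 0 < r by rewrite /r divr_gt0 // ?oppr_gt0 //; lra.
    have hr : r * (D + 1) = - H by rewrite /r divfK //; lra.
    have := hH r (ltW rp); rewrite Se add0r.
    nra.
  have sSp : 0 < sS by rewrite lt_def sSn sS0.
  pose r := sS / sD.
  have rp : 0 < r by rewrite divr_gt0.
  have hr : r * sD = sS by rewrite /r divfK.
  have := hH r (ltW rp).
  rewrite -sS2 -sD2.
  have -> : sS ^+ 2 + H * r + sD ^+ 2 * r ^+ 2 = r * (2 * sS * sD + H).
    have -> : sD ^+ 2 * r ^+ 2 = sS ^+ 2 by rewrite -hr; ring.
    rewrite -hr; ring.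
  have : r * (2 * sS * sD + H) < 0 by rewrite pmulr_rlt0 //; lra.
  lra.
have Sc : c1111 = S - K - D by rewrite /S /K /D; ring.
have [Hle|Hgt] := lerP H (2 * sS * sD).
  exists tB; split => //.
  - have [h1 h2] := @psd_y S D sS sD H sS0 sD0 sS2 sD2 hHlb Hle.
    by rewrite Sc; move: h1; rewrite /H; lra.
  - have [h1 h2] := @psd_y S D sS sD H sS0 sD0 sS2 sD2 hHlb Hle.
    have -> : c1111 + tB = S + D - H by rewrite Sc /H; ring.
    have -> : K - tB = H - 2 * D by rewrite /H; ring.
    by [].
exists (tB + (H - 2 * sS * sD)).
have hy1 : - (2 * sS * sD) <= 2 * sS * sD.
  have : 0 <= sS * sD by apply: mulr_ge0.
  lra.
have [h1 h2] := @psd_y S D sS sD (2 * sS * sD) sS0 sD0 sS2 sD2 hy1 (lexx _).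
split => //.
- lra.
- apply: le_trans htB _; apply: ler_wpM2r => //; lra.
- by rewrite Sc; move: h1; rewrite /H; lra.
- have -> : c1111 + (tB + (H - 2 * sS * sD)) = S + D - 2 * sS * sD by rewrite Sc /H; ring.
  have -> : K - (tB + (H - 2 * sS * sD)) = 2 * sS * sD - 2 * D by rewrite /H; ring.
  by [].
Qed.

End Alg.


Section Fwd.
Variable R : realType.

Lemma sos_eval n (p : {mpoly R[n]}) (v : 'I_n -> R) : sos_forms p -> 0 <= p.@[v].
Proof.
move=> [s [_ ->]]; rewrite raddf_sum /=; apply: sumr_ge0 => g _.
by rewrite expr2 mevalM -expr2 sqr_ge0.
Qed.

Definition mom (x1 x2 w : R) (i : nat) := w * x1 ^+ i + (1 - w) * x2 ^+ i.

Definition Fv (c : part4 -> R) (x1 x2 w : R) :=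
  c P4 * mom x1 x2 w 4 + c P31 * (mom x1 x2 w 3 * mom x1 x2 w 1)
  + c P22 * (mom x1 x2 w 2 * mom x1 x2 w 2)
  + c P211 * (mom x1 x2 w 2 * mom x1 x2 w 1 * mom x1 x2 w 1)
  + c P1111 * (mom x1 x2 w 1 * mom x1 x2 w 1 * mom x1 x2 w 1 * mom x1 x2 w 1).

Lemma psum_eval n k (x1 x2 : R) i : (0 < n)%N -> (k <= n)%N ->
  (psum R n i).@[fun j : 'I_n => if (j < k)%N then x1 else x2]
  = mom x1 x2 (k%:R / n%:R) i.
Proof.
move=> n0 kn.
rewrite /psum mevalZ raddf_sum /=.
under eq_bigr => j _ do rewrite rmorphXn /= mevalXU.
rewrite -(big_mkord xpredT (fun j => (if (j < k)%N then x1 else x2) ^+ i)).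
rewrite (@big_cat_nat _ _ _ k) /=; [|exact: leq0n|exact: kn].
rewrite (eq_big_nat _ _ (F2 := fun _ => x1 ^+ i)); last by move=> j /andP [_ ->].
rewrite [X in _ + X](eq_big_nat _ _ (F2 := fun _ => x2 ^+ i)); last first.
  by move=> j /andP [h _]; rewrite ltnNge h.
rewrite !sumr_const_nat subn0 /mom -[x1 ^+ i *+ k]mulr_natr -[x2 ^+ i *+ (n - k)]mulr_natr natrB //.
have nz : (n%:R : R) != 0 by rewrite pnatr_eq0 -lt0n.
by field.
Qed.

Lemma fseq_eval c n k (x1 x2 : R) : (0 < n)%N -> (k <= n)%N ->
  (fseq c n).@[fun j : 'I_n => if (j < k)%N then x1 else x2]
  = Fv c x1 x2 (k%:R / n%:R).
Proof.
move=> n0 kn.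
rewrite /fseq /ppart !mevalD (mevalZ _ (c P4)) (mevalZ _ (c P31)) (mevalZ _ (c P22)) (mevalZ _ (c P211)) (mevalZ _ (c P1111)) !mevalM !psum_eval //.
Qed.


Lemma Fv_nonneg c : inS4 c -> forall x1 x2 w, 0 <= w -> w <= 1 -> 0 <= Fv c x1 x2 w.
Proof.
move=> H x1 x2 w w0 w1.
have Hq n k : (4 <= n)%N -> (k <= n)%N -> 0 <= Fv c x1 x2 (k%:R / n%:R).
  move=> n4 kn; rewrite -fseq_eval //; last by rewrite (leq_trans _ n4).
  by apply: sos_eval; apply: H.
pose mp i : {poly R} := (x2 ^+ i)%:P + (x1 ^+ i - x2 ^+ i)%:P * 'X.
have hm i y : (mp i).[y] = mom x1 x2 y i.
  by rewrite /mp hornerD hornerC hornerM hornerX hornerC /mom; ring.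
pose Fp : {poly R} := (c P4)%:P * mp 4%N + (c P31)%:P * (mp 3%N * mp 1%N)
  + (c P22)%:P * (mp 2%N * mp 2%N) + (c P211)%:P * (mp 2%N * mp 1%N * mp 1%N)
  + (c P1111)%:P * (mp 1%N * mp 1%N * mp 1%N * mp 1%N).
have hF y : Fp.[y] = Fv c x1 x2 y.
  by rewrite /Fp !hornerD !hornerM !hornerC !hm.
rewrite leNgt; apply/negP => Hneg.
have := @poly_cont R w Fp (- Fv c x1 x2 w); rewrite oppr_gt0 => /(_ Hneg) [d d0 Hd].
pose n := (Num.bound d^-1).+4.
have n4 : (4 <= n)%N by [].
have nd : n%:R^-1 < d.
  have dpos : 0 < d^-1 by rewrite invr_gt0.
  have h1 := @archi_boundP R d^-1 (ltW dpos).
  have h2 : ((Num.bound d^-1)%:R : R) <= n%:R by rewrite ler_nat /n; apply: leq_trans (leqnSn _) _; do 3 apply: leq_trans (leqnSn _) _.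
  rewrite -[d]invrK ltf_pV2 ?posrE ?invr_gt0 ?ltr0n //.
  exact: lt_le_trans h1 h2.
have npos : (0 : R) < n%:R by rewrite ltr0n.
pose k := Num.truncn (w * n%:R).
have [hk1 hk2] : (k%:R <= w * n%:R) /\ (w * n%:R < k.+1%:R).
  by apply/andP; apply: truncn_itv; apply: mulr_ge0 => //; exact: ltW.
have kn : (k <= n)%N.
  rewrite -(ler_nat R); apply: (le_trans hk1).
  nra.
have hdist : `|k%:R / n%:R - w| < d.
  apply: le_lt_trans nd.
  have hni : n%:R^-1 * n%:R = 1 :> R by rewrite mulVf // lt0r_neq0.
  have E : k%:R / n%:R - w = n%:R^-1 * (k%:R - w * n%:R).
    by rewrite mulrBr [_ * (w * _)]mulrCA hni mulr1 mulrC.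
  have ni0 : 0 < n%:R^-1 :> R by rewrite invr_gt0.
  rewrite E normrM (gtr0_norm ni0).
  apply: ler_piMr; first by rewrite invr_ge0 ltW.
  rewrite -addn1 natrD in hk2.
  rewrite ler_norml; apply/andP; split; lra.
have := Hd _ hdist; rewrite !hF.
have := Hq n k n4 kn.
move: (Fv c x1 x2 (k%:R / n%:R)) (Fv c x1 x2 w) Hneg => a b hb ha.
rewrite ltr_norml; lra.
Qed.


Lemma Fv_id c x1 x2 w :
  let m := w * x1 + (1 - w) * x2 in
  let r := w * (1 - w) * (x1 - x2) ^+ 2 in
  let sg := x1 + x2 in
  let S := c P4 + c P31 + c P22 + c P211 + c P1111 in
  let K := c P211 + c P31 in
  let D := c P22 + c P4 in
  Fv c x1 x2 w = S * m ^+ 4 + (K + 2 * D) * m ^+ 2 * r + D * r ^+ 2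
                 + r * (c P31 * m * sg + c P4 * sg ^+ 2).
Proof. rewrite /Fv /mom /=; ring. Qed.


Lemma G_nonneg (c : part4 -> R) : inS4 c ->
  let S := c P4 + c P31 + c P22 + c P211 + c P1111 in
  let K := c P211 + c P31 in
  let D := c P22 + c P4 in
  [/\ 0 <= S, 0 <= D &
    forall sg r, 0 <= r ->
      0 <= S + (K + 2 * D + c P31 * sg + c P4 * sg ^+ 2) * r + D * r ^+ 2].
Proof.
move=> H S K D.
have hS : 0 <= S.
  have := Fv_nonneg _ H 1 1 0 (lexx 0) ler01.
  have -> : Fv c 1 1 0 = S by rewrite Fv_id /= /S; ring.
  by [].
have hD : 0 <= D.
  have h2 : (0 : R) <= 2^-1 by rewrite invr_ge0.
  have h2' : (2^-1 : R) <= 1 by rewrite invf_le1 // ler1n.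
  have := Fv_nonneg _ H 1 (-1) 2^-1 h2 h2'.
  have -> : Fv c 1 (-1) 2^-1 = D by rewrite Fv_id /= /D; field.
  by [].
split => // sg r r0.
have [->|rpos] := eqVneq r 0.
  by rewrite mulr0 addr0 expr0n /= mulr0 addr0.
have rp : 0 < r by rewrite lt_def rpos r0.
pose e := 1 - sg / 2.
pose dl := 2 * Num.sqrt (r + e ^+ 2).
have sq0 : 0 < Num.sqrt (r + e ^+ 2).
  by rewrite sqrtr_gt0; have := sqr_ge0 e; lra.
have dl0 : 0 < dl by rewrite /dl mulr_gt0.
have hdl2 : dl ^+ 2 = 4 * (r + e ^+ 2).
  by rewrite /dl exprMn sqr_sqrtr ?addr_ge0 ?sqr_ge0 //; ring.
pose q := e / dl.
have hq : q * dl = e by rewrite /q divfK // lt0r_neq0.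
pose w := 2^-1 + q.
pose x1 := (sg + dl) / 2.
pose x2 := (sg - dl) / 2.
have hq2 : 4 * q ^+ 2 <= 1.
  have h : (4 * q ^+ 2) * dl ^+ 2 <= 1 * dl ^+ 2.
    rewrite mul1r -mulrA -exprMn hq hdl2; have := r0; nra.
  by move: h; rewrite ler_pM2r // exprn_gt0.
have h2 : (2^-1 : R) * 2 = 1 by rewrite mulVf // pnatr_eq0.
have h2p : (0 : R) < 2^-1 by rewrite invr_gt0.
have w0 : 0 <= w by rewrite /w; nra.
have w1 : w <= 1 by rewrite /w; nra.
have := Fv_nonneg _ H x1 x2 w w0 w1; rewrite Fv_id /=.
have hm : w * x1 + (1 - w) * x2 = 1.
  have -> : w * x1 + (1 - w) * x2 = sg / 2 + q * dl by rewrite /w /x1 /x2; field.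
  by rewrite hq /e; field.
have hr : w * (1 - w) * (x1 - x2) ^+ 2 = r.
  have -> : w * (1 - w) * (x1 - x2) ^+ 2 = dl ^+ 2 / 4 - (q * dl) ^+ 2 by rewrite /w /x1 /x2; field.
  by rewrite hq hdl2; field.
have hsg : x1 + x2 = sg by rewrite /x1 /x2; field.
rewrite hm hr hsg.
have -> : S * 1 ^+ 4 + (K + 2 * D) * 1 ^+ 2 * r + D * r ^+ 2 +
      r * (c P31 * 1 * sg + c P4 * sg ^+ 2)
   = S + (K + 2 * D + c P31 * sg + c P4 * sg ^+ 2) * r + D * r ^+ 2 by ring.
by [].
Qed.

End Fwd.


Theorem corollary6p2 (R : realType) (c : part4 -> R) :
  inS4 c <->
  exists a11 a12 a22 b11 b12 b22 : R,
    [/\ psd2 (sym2 a11 a12 a22), psd2 (sym2 b11 b12 b22)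
      & seq_eq c (combo a11 a12 a22 b11 b12 b22)].
Proof.
split; last first.
  by move=> [a11 [a12 [a22 [b11 [b12 [b22 [h1 h2 h3]]]]]]]; exact: (@backward R c _ _ _ _ _ _ h1 h2 h3).
move=> H.
have [hS hD hG] := @G_nonneg R c H.
have [t [t0 c40 hB c1t hA]] := @final_alg R _ _ _ _ _ hS hD hG.
exists (c P1111 + t), ((c P211 + c P31 - t) / 2), (c P22 + c P4), t, (c P31 / 2), (c P4).
split.
- by apply/psd2_sym2; split.
- by apply/psd2_sym2; split.
move=> n _.
have E l : combo (c P1111 + t) ((c P211 + c P31 - t) / 2) (c P22 + c P4) t (c P31 / 2) (c P4) l = c l.
  by case: l => /=; field.
by rewrite /fseq !E.
Qed.
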